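(* Let $\mu$ be an infinite cardinal, $C_\mu=\mu\times\mu$, and $W_\mu=\{(w,w')\in C_\mu^\omega : \text{there is no } i \text{ with } w_i<w_{i+1}\text{ and } w'_i<w'_{i+1}\}$ (where a word over $C_\mu$ is written as a pair of words $(w,w')$ over $\mu$). Then the set $\mathrm{Res}(W_\mu)$ of left quotients of $W_\mu$, ordered by inclusion, is a well-quasi-order.
   Context: For $u\in C^*$, the left quotient of $W\subseteq C^\omega$ by $u$ is $u^{-1}W=\{w\in C^\omega: uw\in W\}$; $\mathrm{Res}(W)$ is the set of all left quotients. A partially ordered set is a well-quasi-order if it is well-founded and has no infinite antichain. *)

(* Defs.v *)
From Stdlib Require Import List Arith.
Import ListNotations.

(** An infinite cardinal mu, presented (von Neumann style) as an initial
    ordinal: a type [T] with a strict well-order [lt] that is infinite and such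
    that no proper initial segment is equinumerous with (admits an injection
    of) the whole of [T]. *)
Definition strict_total_order {T : Type} (lt : T -> T -> Prop) : Prop :=
  (forall x, ~ lt x x) /\
  (forall x y z, lt x y -> lt y z -> lt x z) /\
  (forall x y, lt x y \/ x = y \/ lt y x).

Definition infinite_type (T : Type) : Prop :=
  exists f : nat -> T, forall m n, f m = f n -> m = n.

Definition is_infinite_cardinal (T : Type) (lt : T -> T -> Prop) : Prop :=
  strict_total_order lt /\
  well_founded lt /\
  infinite_type T /\
  (forall x : T, ~ exists f : T -> T,
       (forall y, lt (f y) x) /\ (forall y z, f y = f z -> y = z)).

Definition oword (A : Type) := nat -> A.

Definition oconcat {A : Type} (u : list A) (w : oword A) : oword A :=
  fun i => match nth_error u i with
           | Some a => a
           | None => w (i - length u)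
           end.

Definition left_quotient {A : Type} (u : list A) (W : oword A -> Prop)
  : oword A -> Prop :=
  fun w => W (oconcat u w).

Definition Res {A : Type} (W : oword A -> Prop) : (oword A -> Prop) -> Prop :=
  fun S => exists u : list A, S = left_quotient u W.

Definition set_incl {X : Type} (S S' : X -> Prop) : Prop :=
  forall x, S x -> S' x.

Definition wqo_incl {X : Type} (P : (X -> Prop) -> Prop) : Prop :=
  (~ exists f : nat -> (X -> Prop),
       (forall n, P (f n)) /\
       (forall n, set_incl (f (S n)) (f n) /\ ~ set_incl (f n) (f (S n)))) /\
  (~ exists f : nat -> (X -> Prop),
       (forall n, P (f n)) /\
       (forall m n, m <> n -> ~ set_incl (f m) (f n))).

Definition W_mu {T : Type} (lt : T -> T -> Prop) : oword (T * T) -> Prop :=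
  fun w => ~ exists i : nat,
      lt (fst (w i)) (fst (w (S i))) /\ lt (snd (w i)) (snd (w (S i))).

(* Main.v *)
Require Import Defs.
From Stdlib Require Import List Arith Lia Classical ClassicalEpsilon.
Import ListNotations.

Section Aux.
Variable T : Type.
Variable lt : T -> T -> Prop.
Hypothesis Htr : forall x y z, lt x y -> lt y z -> lt x z.
Hypothesis Htot : forall x y, lt x y \/ x = y \/ lt y x.
Hypothesis Hwf : well_founded lt.

Definition le_ x y := lt x y \/ x = y.

Lemma wf_min (P : T -> Prop) : (exists t, P t) -> exists t, P t /\ forall s, P s -> ~ lt s t.
Proof.
  intros [t0 H0]. apply NNPP; intro Hn.
  assert (forall t, ~ P t) as A.
  { intro t. induction t as [t IH] using (well_founded_ind Hwf).
    intro Pt. apply Hn. exists t. split; auto.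
    intros s Ps Hs. exact (IH s Hs Ps). }
  exact (A t0 H0).
Qed.

Lemma min_after (a : nat -> T) n : exists j, n < j /\ forall k, n < k -> ~ lt (a k) (a j).
Proof.
  destruct (wf_min (fun t => exists k, n < k /\ a k = t)) as [t [[j [Hj Ht]] Hm]].
  - exists (a (S n)). exists (S n). split; auto.
  - exists j. split; auto. intros k Hk Hl. subst t. apply (Hm (a k)); eauto.
Qed.

Lemma not_lt_le x y : ~ lt y x -> le_ x y.
Proof. intro H. unfold le_. destruct (Htot x y) as [h|[h|h]]; auto. contradiction. Qed.

Lemma mono_sub (a : nat -> T) : exists b : nat -> nat,
  (forall k, b k < b (S k)) /\ (forall k, le_ (a (b k)) (a (b (S k)))).
Proof.
  pose (m := fun n => proj1_sig (constructive_indefinite_description _ (min_after a n))).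
  assert (Hm : forall n, n < m n /\ forall k, n < k -> ~ lt (a k) (a (m n))).
  { intro n. unfold m. destruct (constructive_indefinite_description _ _) as [j Hj]. exact Hj. }
  pose (h := fix h k := match k with 0 => 0 | S k => m (h k) end).
  exists (fun k => h (S k)). split.
  - intro k. simpl. apply Hm.
  - intro k. apply not_lt_le.
    change (h (S (S k))) with (m (h (S k))).
    change (h (S k)) with (m (h k)) at 2.
    apply (proj2 (Hm (h k))).
    pose proof (proj1 (Hm (h k))). pose proof (proj1 (Hm (m (h k)))). simpl. lia.
Qed.

Lemma dickson (c : nat -> T * T) : exists i j, i < j /\ le_ (fst (c i)) (fst (c j)) /\ le_ (snd (c i)) (snd (c j)).
Proof.
  destruct (mono_sub (fun n => fst (c n))) as [b [Hb1 Hb2]].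
  destruct (wf_min (fun t => exists n, snd (c (b n)) = t)) as [t [[m Hmt] Hm]].
  { exists (snd (c (b 0))), 0. reflexivity. }
  exists (b m), (b (S m)). split; [apply Hb1|]. split; [apply Hb2|].
  apply not_lt_le. subst t. apply Hm. exists (S m). reflexivity.
Qed.

Definition asc (p q : T * T) := lt (fst p) (fst q) /\ lt (snd p) (snd q).

Lemma oc_lt {A} (u : list A) w w' i : i < length u -> oconcat u w i = oconcat u w' i.
Proof.
  intro H. unfold oconcat. destruct (nth_error u i) eqn:E; auto.
  apply nth_error_None in E. lia.
Qed.

Lemma oc_ge {A} (u : list A) w i : length u <= i -> oconcat u w i = w (i - length u).
Proof.
  intro H. unfold oconcat. apply nth_error_None in H. now rewrite H.
Qed.

Lemma W_suffix u w : W_mu lt (oconcat u w) -> W_mu lt w.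
Proof.
  intros HW [i Hi]. apply HW. exists (length u + i).
  rewrite !oc_ge by lia. replace (length u + i - length u) with i by lia.
  replace (S (length u + i) - length u) with (S i) by lia. exact Hi.
Qed.

Lemma W_empty w : W_mu lt w -> W_mu lt (oconcat [] w).
Proof.
  intros HW [i Hi]. apply HW. exists i. rewrite !oc_ge in Hi by (simpl; lia).
  simpl in Hi. now rewrite !Nat.sub_0_r in Hi.
Qed.

Lemma incl_main (u v : list (T*T)) w0 d w :
  u <> [] -> v <> [] -> W_mu lt (oconcat v w0) ->
  le_ (fst (oconcat u d (pred (length u)))) (fst (oconcat v d (pred (length v)))) ->
  le_ (snd (oconcat u d (pred (length u)))) (snd (oconcat v d (pred (length v)))) ->
  W_mu lt (oconcat u w) -> W_mu lt (oconcat v w).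
Proof.
  intros Hu Hv Hv0 H1 H2 HW [i Hi].
  assert (lu : length u > 0) by (destruct u; simpl; [congruence|lia]).
  assert (lv : length v > 0) by (destruct v; simpl; [congruence|lia]).
  assert (ltle : forall x y z, le_ x y -> lt y z -> lt x z).
  { intros x y z [h|h] h'; [eauto|now subst]. }
  destruct (lt_eq_lt_dec (S i) (length v)) as [[c|c]|c].
  - apply Hv0. exists i. rewrite (oc_lt v w w0 i), (oc_lt v w w0 (S i)) in Hi by lia. exact Hi.
  - apply HW. exists (pred (length u)).
    rewrite (oc_ge v w (S i)) in Hi by lia. rewrite c, Nat.sub_diag in Hi.
    replace i with (pred (length v)) in Hi by lia.
    rewrite (oc_lt v w d) in Hi by lia.
    rewrite (oc_lt u w d) by lia. rewrite (oc_ge u w (S _)) by lia.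
    replace (S (pred (length u)) - length u) with 0 by lia.
    destruct Hi as [Hi1 Hi2]. split; eauto.
  - apply HW. exists (length u + (i - length v)).
    rewrite !oc_ge in Hi by lia. rewrite !oc_ge by lia.
    replace (length u + (i - length v) - length u) with (i - length v) by lia.
    replace (S (length u + (i - length v)) - length u) with (S i - length v) by lia.
    exact Hi.
Qed.

End Aux.

Theorem lemma5p3 (T : Type) (lt : T -> T -> Prop) :
  is_infinite_cardinal T lt -> wqo_incl (Res (W_mu lt)).
Proof.
  intros [[Hirr [Htr Htot]] [Hwf [[g _] _]]].
  assert (good : forall f : nat -> (oword (T*T) -> Prop), (forall n, Res (W_mu lt) (f n)) ->
            exists i j, i < j /\ set_incl (f i) (f j)).
  { intros f Hf.
    pose (u := fun n => proj1_sig (constructive_indefinite_description _ (Hf n))).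
    assert (Hu : forall n, f n = left_quotient (u n) (W_mu lt)).
    { intro n. unfold u. destruct (constructive_indefinite_description _ _) as [x Hx]. exact Hx. }
    destruct (classic (exists i, forall w, ~ f i w)) as [[i Hi]|Hne].
    { exists i, (S i). split; [lia|]. intros w Hw. exfalso. exact (Hi w Hw). }
    assert (Hne' : forall n, exists w, f n w).
    { intro n. apply NNPP. intro H. apply Hne. exists n. intros w Hw. apply H. eauto. }
    destruct (classic (exists j, 0 < j /\ u j = [])) as [[j [Hj Hj']]|Hnn].
    { exists 0, j. split; auto. intros w Hw. rewrite Hu in Hw |- *. rewrite Hj'.
      unfold left_quotient in *. apply W_empty. eapply W_suffix. exact Hw. }
    pose (d := fun _ : nat => (g 0, g 0)).
    destruct (dickson T lt Htot Hwf (fun n => oconcat (u (S n)) d (pred (length (u (S n))))))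
      as [i [j [Hij [H1 H2]]]].
    exists (S i), (S j). split; [lia|].
    destruct (Hne' (S j)) as [w0 Hw0]. rewrite Hu in Hw0.
    intros w Hw. rewrite Hu in Hw |- *. unfold left_quotient in *.
    eapply (incl_main T lt Htr (u (S i)) (u (S j)) w0 d w); eauto.
    - intro E. apply Hnn. exists (S i). split; [lia|exact E].
    - intro E. apply Hnn. exists (S j). split; [lia|exact E]. }
  split.
  - intros [f [Hf Hc]]. destruct (good f Hf) as [i [j [Hij Hinc]]].
    assert (Hdec : forall k, i < k -> set_incl (f k) (f (S i))).
    { intros k Hk. induction Hk.
      - intros x Hx; exact Hx.
      - intros x Hx. apply IHHk. apply (proj1 (Hc m)). exact Hx. }
    apply (proj2 (Hc i)). intros x Hx. apply (Hdec j Hij). apply Hinc. exact Hx.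
  - intros [f [Hf Ha]]. destruct (good f Hf) as [i [j [Hij Hinc]]].
    apply (Ha i j); [lia|exact Hinc].
Qed.
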